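(* Let $G$ be a complete geometric graph and let $B$ be a subgraph of $G$. If $B$ is a star of $G$ or a comb of $G$, then $B$ shares at least one edge with every simple spanning subgraph of $G$.
   Context: A geometric graph is a graph whose vertices are points in the plane in general position (no three collinear) and whose edges are straight segments between pairs of vertices; $G$ is complete if all pairs of vertices are joined. A geometric graph is simple if no two of its edges cross. A simple spanning subgraph of $G$ is a subgraph $H\subseteq G$ that is non-crossing and has no isolated vertices, i.e., every vertex of $G$ is incident to an edge of $H$. A star of $G$ is the set of all edges of $G$ emanating from a single vertex. A comb of $G$ is a simple spanning subgraph $B$ of $G$ such that: (1) the intersection of $B$ with the boundary of $\mathrm{conv}(V(G))$ is a simple path $P$; (2) each vertex in $V(G)\setminus P$ is connected by a unique edge of $B$ to an interior (non-endpoint) vertex of $P$; (3) for each edge $e$ of $B$, the line spanned by $e$ does not cross any edge of $B$. *)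

(* Defs.v *)
From HB Require Import structures.
From mathcomp Require Import all_boot all_order all_algebra.
From mathcomp Require Import all_classical all_reals topology normedtype.
Set Implicit Arguments. Unset Strict Implicit. Unset Printing Implicit Defensive.
Import Order.TTheory GRing.Theory Num.Theory.
Import numFieldNormedType.Exports.
Local Open Scope ring_scope.
Local Open Scope classical_set_scope.

Section Geom.
Variable R : realType.
Local Notation point := (R * R)%type.

Definition orient (a b c : point) : R :=
  (b.1 - a.1) * (c.2 - a.2) - (b.2 - a.2) * (c.1 - a.1).
Definition collinear (a b c : point) : Prop := orient a b c = 0.

Definition on_seg (z a b : point) : Prop :=
  exists t : R, 0 <= t <= 1 /\
    z = ((1 - t) * a.1 + t * b.1, (1 - t) * a.2 + t * b.2).

Definition on_line (z a b : point) : Prop :=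
  exists t : R, z = (a.1 + t * (b.1 - a.1), a.2 + t * (b.2 - a.2)).

Definition line_crosses_seg (a b c d : point) : Prop :=
  ~ on_line c a b /\ ~ on_line d a b /\ exists z, on_seg z c d /\ on_line z a b.

Variable V : finType.
Variable p : V -> point.

Definition general_position : Prop :=
  injective p /\
  forall a b c : V, a != b -> b != c -> a != c -> ~ collinear (p a) (p b) (p c).

Definition conv_hull : set (R * R)%type :=
  [set z | exists w : V -> R, (forall v, 0 <= w v) /\ \sum_v w v = 1 /\
      z = (\sum_v w v * (p v).1, \sum_v w v * (p v).2)].
Definition hull_boundary : set (R * R)%type :=
  closure conv_hull `\` interior conv_hull.

(* A graph on the vertex set (a subgraph of the complete geometric graph G):
   a symmetric irreflexive edge relation; the edge {u,v} is the segment
   [p u, p v]. *)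
Definition is_graph (H : rel V) : Prop :=
  (forall u v, H u v = H v u) /\ (forall u, ~~ H u u).

Definition edges_cross (u v x y : V) : Prop :=
  (u != v /\ x != y /\ u != x /\ u != y /\ v != x /\ v != y) /\
  exists z, on_seg z (p u) (p v) /\ on_seg z (p x) (p y).

Definition simple_graph (H : rel V) : Prop :=
  forall u v x y, H u v -> H x y -> ~ edges_cross u v x y.

Definition no_isolated (H : rel V) : Prop := forall v, exists u, H v u.

Definition simple_spanning (H : rel V) : Prop :=
  [/\ is_graph H, simple_graph H & no_isolated H].

Definition star (v : V) : rel V := fun a b => (a != b) && ((a == v) || (b == v)).

Definition graph_pts (H : rel V) : set point :=
  [set z | exists u w, H u w /\ on_seg z (p u) (p w)].

Definition path_pts (x0 : V) (P : seq V) : set point :=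
  [set z | (exists x, x \in P /\ z = p x) \/
     exists i, i.+1 < size P /\ on_seg z (p (nth x0 P i)) (p (nth x0 P i.+1))]%N.

Definition path_interior (x0 : V) (P : seq V) (u : V) : Prop :=
  exists i, (0 < i /\ i.+1 < size P)%N /\ u = nth x0 P i.

Definition is_comb (B : rel V) : Prop :=
  simple_spanning B /\
  exists (x0 : V) (P : seq V),
    [/\
        (0 < size P)%N /\ uniq P,
        (forall i, i.+1 < size P -> B (nth x0 P i) (nth x0 P i.+1))%N,
        graph_pts B `&` hull_boundary = path_pts x0 P,
        (forall w, w \notin P ->
           exists u, path_interior x0 P u /\ forall x, B w x = (x == u)) &
        (* (3) the line spanned by any edge of B crosses no edge of B *)
        (forall u v x y, B u v -> B x y ->
           ~ line_crosses_seg (p u) (p v) (p x) (p y))].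

End Geom.

(* Main.v *)
Require Import Defs.
From mathcomp Require Import all_boot all_order all_algebra.
From mathcomp Require Import all_classical all_reals topology normedtype.
From mathcomp Require Import ring lra zify.
Set Implicit Arguments. Unset Strict Implicit. Unset Printing Implicit Defensive.
Import Order.TTheory GRing.Theory Num.Theory.
Import numFieldNormedType.Exports.
Local Open Scope ring_scope.
Local Open Scope classical_set_scope.
Section Geo.
Variable R : realType.
Local Notation point := (R * R)%type.

Definition cmb (a b : point) (t : R) : point :=
  ((1 - t) * a.1 + t * b.1, (1 - t) * a.2 + t * b.2).

Lemma orient_cyc (a b c : point) : orient a b c = orient b c a.
Proof. rewrite /orient; ring. Qed.

Lemma orient_swap (a b c : point) : orient a c b = - orient a b c.
Proof. rewrite /orient; ring. Qed.

Lemma orient_swap12 (a b c : point) : orient b a c = - orient a b c.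
Proof. rewrite /orient; ring. Qed.

Lemma orient_cmb (a b x y : point) t :
  orient a b (cmb x y t) = (1 - t) * orient a b x + t * orient a b y.
Proof. rewrite /orient /cmb /=; ring. Qed.

Lemma orient_aa (a b : point) : orient a b a = 0.
Proof. rewrite /orient; ring. Qed.
Lemma orient_ab (a b : point) : orient a b b = 0.
Proof. rewrite /orient; ring. Qed.

Lemma on_line_orient (z a b : point) : on_line z a b -> orient a b z = 0.
Proof. by case=> t ->; rewrite /orient /=; ring. Qed.

Lemma orient_on_line (z a b : point) : a != b -> orient a b z = 0 -> on_line z a b.
Proof.
move=> ab; rewrite /orient => h.
have [e1|ne1] := eqVneq (b.1 - a.1) 0.
  have ne2 : b.2 - a.2 != 0.
    apply: contraNneq ab => e2; apply/eqP; case: a b e1 e2 {h} => a1 a2 [b1 b2] /=.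
    by move=> /eqP; rewrite subr_eq0 => /eqP -> /eqP; rewrite subr_eq0 => /eqP ->.
  exists ((z.2 - a.2) / (b.2 - a.2)).
  case: z h => z1 z2 /= h; congr (_, _); last by field.
  move: h; rewrite e1 mul0r sub0r => /eqP; rewrite oppr_eq0 mulf_eq0 (negbTE ne2) /=.
  rewrite subr_eq0 => /eqP ->; ring.
exists ((z.1 - a.1) / (b.1 - a.1)).
case: z h => z1 z2 /= h; congr (_, _); first by field.
have : (b.1 - a.1) * (z2 - (a.2 + (z1 - a.1) / (b.1 - a.1) * (b.2 - a.2))) = 0.
  by rewrite -[RHS]h; field.
by move/eqP; rewrite mulf_eq0 (negbTE ne1) /= subr_eq0 => /eqP.
Qed.

Lemma cross_point (a b c d : point) : orient a b c * orient a b d < 0 ->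
  exists l, 0 < l < 1 /\ orient a b (cmb c d l) = 0.
Proof.
set oc := orient a b c; set od := orient a b d => h.
have hne : oc - od != 0.
  apply/eqP => e; move: h; have -> : oc = od by apply/eqP; rewrite -subr_eq0 e.
  nra.
exists (oc / (oc - od)); split; last first.
  by rewrite orient_cmb -/oc -/od; field.
have [ocp|ocn] := ltP 0 oc.
  have odn : od < 0 by rewrite -(pmulr_rlt0 _ ocp).
  have dp : 0 < oc - od by rewrite subr_gt0 (lt_trans odn).
  rewrite divr_gt0 //= ltr_pdivrMr // mul1r; lra.
have ocn' : oc < 0.
  rewrite lt_neqAle ocn andbT; apply/eqP => e; move: h; rewrite e mul0r; lra.
have odp : 0 < od by rewrite -(nmulr_rlt0 _ ocn').
have dn : oc - od < 0 by lra.
rewrite ltr_ndivrMr // mul1r ltr_ndivlMr // mul0r; lra.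
Qed.

Lemma cmb_on_seg (c d : point) l : 0 <= l <= 1 -> on_seg (cmb c d l) c d.
Proof. by move=> h; exists l. Qed.

Lemma line_crosses (a b c d : point) : a != b -> orient a b c * orient a b d < 0 ->
  line_crosses_seg a b c d.
Proof.
move=> ab h.
have oc0 : orient a b c != 0 by apply/eqP => e; move: h; rewrite e mul0r ltxx.
have od0 : orient a b d != 0 by apply/eqP => e; move: h; rewrite e mulr0 ltxx.
split; first by move/on_line_orient; apply/eqP.
split; first by move/on_line_orient; apply/eqP.
have [l [hl hz]] := cross_point h.
exists (cmb c d l); split.
  by apply: cmb_on_seg; case/andP: hl => /ltW -> /ltW ->.
exact: orient_on_line.
Qed.

Lemma lines_unique (a b c d z1 z2 : point) : orient a b c != orient a b d ->
  orient a b z1 = 0 -> orient a b z2 = 0 -> orient c d z1 = 0 -> orient c d z2 = 0 ->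
  z1 = z2.
Proof.
move=> K h1 h2 h3 h4.
have K0 : orient a b c - orient a b d != 0 by rewrite subr_eq0.
have e1 : (orient a b c - orient a b d) * (z1.1 - z2.1) =
  (orient c d z1 - orient c d z2) * (b.1 - a.1) - (orient a b z1 - orient a b z2) * (d.1 - c.1).
  rewrite /orient; ring.
have e2 : (orient a b c - orient a b d) * (z1.2 - z2.2) =
  (orient c d z1 - orient c d z2) * (b.2 - a.2) - (orient a b z1 - orient a b z2) * (d.2 - c.2).
  rewrite /orient; ring.
move: e1 e2; rewrite h1 h2 h3 h4 !subrr !mul0r subrr => /eqP e1 /eqP e2.
move: e1 e2; rewrite !mulf_eq0 (negbTE K0) /= !subr_eq0 => /eqP e1 /eqP e2.
by move: e1 e2; case: z1 {h1 h3} => ? ?; case: z2 {h2 h4} => ? ? /= -> ->.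
Qed.

Lemma seg_inter (a b c d : point) : orient a b c * orient a b d < 0 ->
  orient c d a * orient c d b < 0 -> exists z, on_seg z a b /\ on_seg z c d.
Proof.
move=> h1 h2.
have [l [hl hz]] := cross_point h2.
have [m [hm hz']] := cross_point h1.
exists (cmb a b l); split.
  by apply: cmb_on_seg; case/andP: hl => /ltW -> /ltW ->.
suff -> : cmb a b l = cmb c d m.
  by apply: cmb_on_seg; case/andP: hm => /ltW -> /ltW ->.
apply: (@lines_unique a b c d _ _ _ _ hz' hz).
- by apply/eqP => e; move: h1; rewrite e; nra.
- by rewrite orient_cmb orient_aa orient_ab; ring.
- by rewrite orient_cmb orient_aa orient_ab; ring.
Qed.

Lemma sq_pos (x : R) : x != 0 -> 0 < x * x.
Proof. by move=> h; rewrite -expr2 exprn_even_gt0 //= h orbT. Qed.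

Lemma trans_pos (a b c : R) : 0 < a * b -> 0 < b * c -> 0 < a * c.
Proof.
move=> h1 h2; have b0 : b != 0 by apply/eqP => e; move: h1; rewrite e mulr0 ltxx.
have := mulr_gt0 h1 h2.
have -> : a * b * (b * c) = (a * c) * (b * b) by ring.
by rewrite pmulr_lgt0 // sq_pos.
Qed.

Lemma neg_prod (a b : R) : a != 0 -> b != 0 -> ~ 0 < a * b -> a * b < 0.
Proof.
move=> a0 b0 h; rewrite lt_neqAle mulf_neq0 //=; rewrite leNgt; exact/negP.
Qed.
End Geo.
Section Alg.
Variable R : realType.
Lemma sgn_mul_neg (s a b : R) : 0 < s * a -> s * b < 0 -> a * b < 0.
Proof.
move=> h1 h2; have s0 : s != 0 by apply/eqP => e; move: h1; rewrite e mul0r ltxx.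
have : (s * a) * (s * b) < 0 by rewrite pmulr_rlt0.
have -> : (s * a) * (s * b) = (s * s) * (a * b) by ring.
by rewrite pmulr_rlt0 // sq_pos.
Qed.
Lemma conv_pos (u v l : R) : 0 < u -> 0 < v -> 0 < l < 1 -> 0 < (1 - l) * u + l * v.
Proof.
move=> hu hv /andP[l0 l1]; apply: addr_gt0; apply: mulr_gt0 => //; lra.
Qed.
Lemma t_pos (t w X : R) : 0 < w -> 0 < X -> X = t * w -> 0 < t.
Proof. by move=> hw hX e; move: hX; rewrite e pmulr_lgt0. Qed.
Lemma t_gt1 (A X t : R) : 0 < A * X -> 0 < t -> (1 - t) * A + t * X = 0 -> 1 < t.
Proof.
move=> h t0 e.
have : (1 - t) * (A * A) = - (t * (A * X)).
  have e' := congr1 (fun z => A * z) e; rewrite /= mulr0 in e'.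
  by apply/eqP; rewrite -addr_eq0; apply/eqP; rewrite -e'; ring.
move=> e2; have A0 : A != 0 by apply/eqP => e3; move: h; rewrite e3 mul0r ltxx.
have : (1 - t) * (A * A) < 0 by rewrite e2 oppr_lt0 mulr_gt0.
by rewrite pmulr_llt0 ?sq_pos // subr_lt0.
Qed.
Lemma final_contra (Y Y' A t l : R) : 0 < Y * Y' -> 0 < Y * A -> 1 < t -> 0 < l < 1 ->
  (1 - t) * A = (1 - l) * Y + l * Y' -> False.
Proof.
move=> h1 h2 t1 hl e.
have : (1 - t) * (Y * A) = (1 - l) * (Y * Y) + l * (Y * Y').
  by rewrite mulrCA e; ring.
have Y0 : Y != 0 by apply/eqP => e3; move: h1; rewrite e3 mul0r ltxx.
have lhs : (1 - t) * (Y * A) < 0 by rewrite pmulr_llt0 // subr_lt0.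
have rhs : 0 < (1 - l) * (Y * Y) + l * (Y * Y') by apply: conv_pos; rewrite ?sq_pos.
lra.
Qed.
End Alg.
Section Topo.
Variables (R : realType) (V : finType) (p : V -> R * R).
Local Notation O a b d := (orient (p a) (p b) (p d)).

Lemma sum_ind (F : V -> R) x : \sum_v (v == x)%:R * F v = F x.
Proof.
rewrite (bigD1 x) //= eqxx mul1r big1 ?addr0 // => v /negbTE ->; by rewrite mul0r.
Qed.

Lemma hull_tri (va vb vc : V) (al be ga : R) :
  0 <= al -> 0 <= be -> 0 <= ga -> al + be + ga = 1 ->
  conv_hull p (al * (p va).1 + be * (p vb).1 + ga * (p vc).1,
               al * (p va).2 + be * (p vb).2 + ga * (p vc).2).
Proof.
move=> h1 h2 h3 hs.
exists (fun v => al * (v == va)%:R + be * (v == vb)%:R + ga * (v == vc)%:R).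
have E : forall F : V -> R, \sum_v (al * (v == va)%:R + be * (v == vb)%:R + ga * (v == vc)%:R) * F v
    = al * F va + be * F vb + ga * F vc.
  move=> F; rewrite (eq_bigr (fun v => al * ((v == va)%:R * F v) + be * ((v == vb)%:R * F v)
     + ga * ((v == vc)%:R * F v))); last by move=> v _; ring.
  by rewrite !big_split /= -!mulr_sumr !sum_ind.
split; first by move=> v; rewrite !addr_ge0 // mulr_ge0 // ler0n.
split.
  have E1 := E (fun _ => 1).
  apply: (etrans _ (etrans E1 _)); last by rewrite !mulr1.
  by apply: eq_bigr => v _; rewrite mulr1.
by rewrite !E.
Qed.

Lemma half_bound (D L : R) : D != 0 -> `|L| <= `|D| / 2 -> 0 <= (D / 2 + L) / D.
Proof.
move=> D0; rewrite ler_norml => /andP[h1 h2].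
have [Dp|Dn] := ltP 0 D.
  rewrite gtr0_norm // in h1 h2; apply: mulr_ge0; [lra | by rewrite invr_ge0 ltW].
have Dn' : D < 0 by rewrite lt_neqAle D0.
rewrite ltr0_norm // in h1 h2.
have -> : (D / 2 + L) / D = (- (D / 2 + L)) * (- D)^-1 by rewrite invrN mulrNN.
apply: mulr_ge0; [lra | rewrite invr_ge0; lra].
Qed.

Lemma lin_bound (d1 d2 u w e M : R) : `|d1| < e -> `|d2| < e -> `|u| + `|w| <= M ->
  `|d1 * u + d2 * w| <= e * M.
Proof.
move=> h1 h2 hM.
apply: (le_trans (ler_normD _ _)); rewrite !normrM.
have e0 : 0 <= e by apply: le_trans (ltW h1).
apply: (@le_trans _ _ (e * (`|u| + `|w|))); last by apply: ler_wpM2l.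
rewrite mulrDr; apply: lerD; apply: ler_wpM2r => //; exact: ltW.
Qed.

Definition midp (a b : R * R) : R * R := cmb a b (2^-1).

Lemma tri_nbhs (a b c : V) : O a b c != 0 ->
  exists2 e, 0 < e & forall z : R * R, `|z.1 - (midp (p a) (p b)).1| < e ->
    `|z.2 - (midp (p a) (p b)).2| < e -> 0 <= orient (p a) (p b) z / O a b c -> conv_hull p z.
Proof.
set D := O a b c => D0.
set M := 1 + `|(p b).2 - (p c).2| + `|(p c).1 - (p b).1| + `|(p c).2 - (p a).2| + `|(p a).1 - (p c).1|.
have M0 : 0 < M by rewrite /M; apply: (@lt_le_trans _ _ 1) => //; rewrite -!addrA lerDl !addr_ge0.
have Dp : 0 < `|D| by rewrite normr_gt0.
exists (`|D| / (2 * M)); first by apply: divr_gt0 => //; apply: mulr_gt0.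
move=> z h1 h2 hg.
set m := midp (p a) (p b) in h1 h2.
have eM : `|D| / (2 * M) * M = `|D| / 2 by field; apply: lt0r_neq0.
set al := orient z (p b) (p c) / D.
set be := orient (p a) z (p c) / D.
set ga := orient (p a) (p b) z / D.
have Hal : 0 <= al.
  have -> : al = (D / 2 + ((z.1 - m.1) * ((p b).2 - (p c).2) + (z.2 - m.2) * ((p c).1 - (p b).1))) / D.
    by rewrite /al /m /midp /cmb /D /orient /=; field.
  apply: half_bound => //; rewrite -eM; apply: lin_bound => //.
  rewrite /M; have := normr_ge0 ((p c).2 - (p a).2); have := normr_ge0 ((p a).1 - (p c).1).
  lra.
have Hbe : 0 <= be.
  have -> : be = (D / 2 + ((z.1 - m.1) * ((p c).2 - (p a).2) + (z.2 - m.2) * ((p a).1 - (p c).1))) / D.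
    by rewrite /be /m /midp /cmb /D /orient /=; field.
  apply: half_bound => //; rewrite -eM; apply: lin_bound => //.
  rewrite /M; have := normr_ge0 ((p b).2 - (p c).2); have := normr_ge0 ((p c).1 - (p b).1).
  lra.
have Hs : al + be + ga = 1 by rewrite /al /be /ga /D /orient; field.
have -> : z = (al * (p a).1 + be * (p b).1 + ga * (p c).1,
               al * (p a).2 + be * (p b).2 + ga * (p c).2).
  rewrite /al /be /ga; move: D0; rewrite /D /orient => D0.
  by case: z {h1 h2 hg Hal Hbe Hs al be ga} => z1 z2 /=; congr (_, _); field.
exact: hull_tri.
Qed.
Lemma mid_interior (a b c1 c2 : V) : 0 < O a b c1 -> O a b c2 < 0 ->
  interior (conv_hull p) (midp (p a) (p b)).
Proof.
move=> hc1 hc2.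
have [e1 e10 H1] := tri_nbhs (lt0r_neq0 hc1).
have [e2 e20 H2] := tri_nbhs (ltr0_neq0 hc2).
rewrite /interior; apply/nbhs_ballP; exists (Num.min e1 e2) => /=.
  by rewrite lt_min e10 e20.
move=> z [/= h1 h2].
have {h1} : `|z.1 - (midp (p a) (p b)).1| < Num.min e1 e2.
  by move: h1; rewrite /ball /= distrC.
have {h2} : `|z.2 - (midp (p a) (p b)).2| < Num.min e1 e2.
  by move: h2; rewrite /ball /= distrC.
rewrite !lt_min => /andP[h21 h22] /andP[h11 h12].
have [hp|hn] := leP 0 (orient (p a) (p b) z).
  apply: H1 => //; apply: mulr_ge0 => //; by rewrite invr_ge0 ltW.
apply: H2 => //.
have -> : orient (p a) (p b) z / O a b c2 = (- orient (p a) (p b) z) * (- O a b c2)^-1.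
  by rewrite invrN mulrNN.
apply: mulr_ge0; [rewrite oppr_ge0; exact: ltW | rewrite invr_ge0 oppr_ge0; exact: ltW].
Qed.
End Topo.
Record comb_ok (R : realType) (V : finType) (p : V -> R * R) (B : rel V)
   (k : nat) (c : nat -> V) (g : V -> nat) (s : R) : Prop := CombOk {
 ok_gp : general_position p;
 ok_sym : forall u v, B u v = B v u;
 ok_irr : forall u, ~~ B u u;
 ok_cg : forall j, (j <= k)%N -> g (c j) = j;
 ok_gk : forall v, (g v <= k)%N;
 ok_leaf : forall v, v = c (g v) \/ ((0 < g v < k)%N /\ B v (c (g v)));
 ok_path : forall j, (j < k)%N -> B (c j) (c j.+1);
 ok_c3 : forall u v x y, B u v -> B x y -> ~ line_crosses_seg (p u) (p v) (p x) (p y);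
 ok_F2 : forall j v, (j < k)%N -> v != c j -> v != c j.+1 ->
     0 < s * orient (p (c j)) (p (c j.+1)) (p v) }.

Lemma comb_ok_rev (R : realType) (V : finType) (p : V -> R * R) (B : rel V)
   (k : nat) (c : nat -> V) (g : V -> nat) (s : R) :
  comb_ok p B k c g s -> comb_ok p B k (fun j => c (k - j)%N) (fun v => (k - g v)%N) (- s).
Proof.
case=> gp sym irr cg gk leaf path c3 F2; split => //.
- by move=> j jk /=; rewrite cg ?leq_subr //; lia.
- by move=> v; rewrite leq_subr.
- move=> v; have gvk := gk v; have e : (k - (k - g v) = g v)%N by lia.
  rewrite e; case: (leaf v) => [ev|[h1 h2]]; [by left | right; split => //; lia].
- move=> j jk /=; rewrite sym; have -> : (k - j = (k - j.+1).+1)%N by lia.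
  apply: path; lia.
- move=> j v jk /= h1 h2.
  have e : (k - j = (k - j.+1).+1)%N by lia.
  move: h1 h2; rewrite e => h1 h2.
  by rewrite orient_swap12 mulrNN; apply: F2 => //; lia.
Qed.

Section Core1.
Variables (R : realType) (V : finType) (p : V -> R * R) (B : rel V)
   (k : nat) (c : nat -> V) (g : V -> nat) (s : R).
Hypothesis ok : comb_ok p B k c g s.
Local Notation O a b d := (orient (p a) (p b) (p d)).

Lemma gneq x y : g x != g y -> x != y.
Proof. by apply: contraNneq => ->. Qed.

Lemma O_nz a b d : a != b -> b != d -> a != d -> O a b d != 0.
Proof. by move=> h1 h2 h3; apply/eqP; case: (ok_gp ok) => _ /(_ a b d h1 h2 h3). Qed.

Lemma B_neq a b : B a b -> a != b.
Proof. by apply: contraTneq => ->; apply: (ok_irr ok). Qed.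

Lemma sameside e f x y : B e f -> B x y -> x != e -> x != f -> y != e -> y != f ->
  0 < O e f x * O e f y.
Proof.
move=> bef bxy h1 h2 h3 h4.
have ef := B_neq bef; have xy := B_neq bxy.
have n1 : O e f x != 0 by apply: O_nz; rewrite // eq_sym.
have n2 : O e f y != 0 by apply: O_nz; rewrite // eq_sym.
apply: contrapT => hn; have := neg_prod n1 n2 hn => hneg.
apply: (ok_c3 ok bef bxy); apply: line_crosses => //.
by rewrite (inj_eq (ok_gp ok).1).
Qed.

Lemma R_side m e f : B e f -> (g e <= m)%N -> (g f <= m)%N -> (m < k)%N ->
  forall v, (m < g v)%N -> 0 < O e f v * O e f (c m.+1).
Proof.
move=> bef ge gf mk.
have ne : forall v, (m < g v)%N -> v != e by move=> v hv; apply: gneq; apply/eqP; lia.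
have nf : forall v, (m < g v)%N -> v != f by move=> v hv; apply: gneq; apply/eqP; lia.
have gc : forall j, (j <= k)%N -> g (c j) = j by apply: (ok_cg ok).
have chain : forall j, (m < j <= k)%N -> 0 < O e f (c j) * O e f (c m.+1).
  elim=> [|j IH] hj; first lia.
  have [ejm|njm] := eqVneq j m.
    rewrite ejm; apply: sq_pos; apply: O_nz; first exact: B_neq.
      by rewrite eq_sym nf // gc //; lia.
    by rewrite eq_sym ne // gc //; lia.
  have h1 := IH ltac:(lia).
  have h2 : 0 < O e f (c j.+1) * O e f (c j).
    rewrite mulrC; apply: sameside => //; first by apply: (ok_path ok); lia.
    + by apply: ne; rewrite gc //; lia.
    + by apply: nf; rewrite gc //; lia.
    + by apply: ne; rewrite gc //; lia.
    + by apply: nf; rewrite gc //; lia.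
  exact: trans_pos h2 h1.
move=> v hv; have gvk := ok_gk ok v.
case: (ok_leaf ok v) => [ev|[hl bl]]; first by rewrite ev; apply: chain; lia.
apply: (@trans_pos _ _ (O e f (c (g v)))); last by apply: chain; lia.
apply: sameside => //; [exact: ne | exact: nf | | ].
  by apply: ne; rewrite gc //; lia.
by apply: nf; rewrite gc //; lia.
Qed.
End Core1.
Section Core2.
Variables (R : realType) (V : finType) (p : V -> R * R) (B : rel V)
   (k : nat) (c : nat -> V) (g : V -> nat) (s : R).
Hypothesis ok : comb_ok p B k c g s.
Local Notation O a b d := (orient (p a) (p b) (p d)).

Lemma L_side m e f : B e f -> (m <= g e)%N -> (m <= g f)%N -> (0 < m)%N ->
  forall v, (g v < m)%N -> 0 < O e f v * O e f (c m.-1).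
Proof.
move=> bef ge gf m0 v gv.
have gek := ok_gk ok e.
have := @R_side _ _ _ _ _ _ _ _ (comb_ok_rev ok) (k - m)%N e f bef ltac:(lia) ltac:(lia)
   ltac:(lia) v ltac:(lia).
by have -> : (k - (k - m).+1 = m.-1)%N by lia.
Qed.

Ltac gdist gc := apply: (gneq (g:=g)); apply/eqP; rewrite ?gc; lia.

Lemma nbr_right i x : (i < k)%N -> (i < g x)%N -> x != c i.+1 ->
  exists x', B x x' /\ (i < g x')%N.
Proof.
move=> ik ix xb; have gc := ok_cg ok; have gxk := ok_gk ok x.
case: (ok_leaf ok x) => [ex|[hl bl]]; last by exists (c (g x)); rewrite gc.
have gx2 : (i.+1 < g x)%N.
  rewrite ltn_neqAle ix andbT; apply/eqP => e; move: xb; rewrite ex -e eqxx //.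
exists (c (g x).-1); split; last by rewrite gc //; lia.
have hk : ((g x).-1 < k)%N by lia.
have hp := ok_path ok hk.
rewrite prednK in hp; last lia.
by rewrite (ok_sym ok) [X in B _ X]ex.
Qed.

Lemma ng z w : (g z < g w)%N -> z != w.
Proof. by move=> h; apply: (gneq (g:=g)); rewrite neq_ltn h. Qed.
Lemma ng' z w : (g w < g z)%N -> z != w.
Proof. by move=> h; apply: (gneq (g:=g)); rewrite neq_ltn h orbT. Qed.

Lemma left_prop i (Q : V -> Prop) : (0 < i)%N -> (i <= k)%N -> Q (c i.-1) ->
  (forall y y', B y y' -> (g y < i)%N -> (g y' < i)%N -> Q y -> Q y') ->
  forall v, (g v < i)%N -> Q v.
Proof.
move=> i0 ik base step.
have gc := ok_cg ok.
have chain : forall d, (d < i)%N -> Q (c (i.-1 - d)).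
  elim => [|d IH] hd; first by rewrite subn0.
  apply: (step (c (i.-1 - d))); last by apply: IH; lia.
  - have -> : (i.-1 - d = (i.-1 - d.+1).+1)%N by lia.
    by rewrite (ok_sym ok); apply: (ok_path ok); lia.
  - by rewrite gc //; lia.
  - by rewrite gc //; lia.
move=> v gv; have gvk := ok_gk ok v.
have cv : Q (c (g v)).
  have := chain (i.-1 - g v)%N ltac:(lia).
  by have -> : (i.-1 - (i.-1 - g v) = g v)%N by lia.
case: (ok_leaf ok v) => [ev|[hl bl]]; first by rewrite ev.
apply: (step (c (g v))) => //.
- by rewrite (ok_sym ok).
- by rewrite gc //; lia.
Qed.

Lemma step_lemma i x : (i < k)%N -> (i < g x)%N -> x != c i.+1 ->
  0 < s * O (c i) (c i.+1) x ->
  forall y1 y2, B y1 y2 -> (g y1 < i)%N -> (g y2 < i)%N ->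
    0 < s * O (c i) x y1 -> 0 < s * O (c i) x y2.
Proof.
move=> ik ix xb Fx y1 y2 b12 g1 g2 Q1.
have gc := ok_cg ok; have F2 := ok_F2 ok.
have ga : g (c i) = i by rewrite gc // ltnW.
have gb : g (c i.+1) = i.+1 by rewrite gc.
have s0 : s != 0 by apply/eqP => e; move: Fx; rewrite e mul0r ltxx.
have d1 : y1 != c i by apply: ng; rewrite ga.
have d2 : y2 != c i by apply: ng; rewrite ga.
have d3 : y1 != c i.+1 by apply: ng; rewrite gb ltnS ltnW.
have d4 : y2 != c i.+1 by apply: ng; rewrite gb ltnS ltnW.
have d5 : x != c i by apply: ng'; rewrite ga.
have d6 : x != y2 by apply: ng'; exact: ltn_trans g2 ix.
have g1' : (g y1 <= i)%N by apply: ltnW.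
have g2' : (g y2 <= i)%N by apply: ltnW.
apply: contrapT => hn.
have n2 : O (c i) x y2 != 0.
  by apply: (O_nz ok); [rewrite eq_sym | | rewrite eq_sym].
have neg := neg_prod s0 n2 hn.
have hprod : O (c i) x y1 * O (c i) x y2 < 0 by exact: sgn_mul_neg Q1 neg.
have [l [hl hz]] := cross_point hprod.
have ax : p (c i) != p x by rewrite eq_sym; apply: contra_neq d5 => /(ok_gp ok).1 ->.
have [t ht] := orient_on_line ax hz.
have ez : cmb (p y1) (p y2) l = cmb (p (c i)) (p x) t.
  by rewrite ht /cmb; congr (_, _); ring.
have F1 : 0 < s * O (c i) (c i.+1) y1 by apply: F2.
have F1' : 0 < s * O (c i) (c i.+1) y2 by apply: F2.
have e1 := orient_cmb (p (c i)) (p (c i.+1)) (p y1) (p y2) l.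
rewrite ez orient_cmb orient_aa in e1.
rewrite mulr0 add0r in e1.
have t0 : 0 < t.
  apply: (t_pos (w := s * O (c i) (c i.+1) x)) Fx _ _.
    exact: (conv_pos (l := l) F1 F1' hl).
  by rewrite [t * _]mulrCA e1; ring.
have e2 := orient_cmb (p y1) (p y2) (p y1) (p y2) l.
rewrite ez orient_cmb orient_aa orient_ab in e2.
have s1 : 0 < O y1 y2 x * O y1 y2 (c i.+1) by apply: (R_side ok b12).
have s2 : 0 < O y1 y2 (c i) * O y1 y2 (c i.+1).
  by apply: (sameside ok b12 (ok_path ok ik)); rewrite eq_sym.
have s3 : 0 < O y1 y2 (c i) * O y1 y2 x by rewrite mulrC in s1; exact: trans_pos s2 s1.
rewrite !mulr0 addr0 in e2.
have t1 : 1 < t by exact: t_gt1 s3 t0 e2.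
have [x' [bxx' ix']] := nbr_right ik ix xb.
have e3 := orient_cmb (p x) (p x') (p y1) (p y2) l.
rewrite ez orient_cmb in e3.
have : orient (p x) (p x') (p x) = 0 by rewrite orient_aa.
move=> e4; rewrite e4 mulr0 addr0 in e3.
have s4 : 0 < O x x' y1 * O x x' y2.
  apply: (sameside ok) => //; apply: ng.
  - exact: ltn_trans g1 ix.
  - exact: ltn_trans g1 ix'.
  - exact: ltn_trans g2 ix.
  - exact: ltn_trans g2 ix'.
have s5 : 0 < O x x' y1 * O x x' (c (i.+1).-1).
  by apply: (L_side bxx') => //.
rewrite /= in s5.
exact: final_contra s4 s5 t1 hl e3.
Qed.

Lemma claimA i x y : (0 < i)%N -> (i < k)%N -> (i < g x)%N -> x != c i.+1 ->
  (g y <= i)%N -> y != c i -> 0 < s * O (c i) x y.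
Proof.
move=> i0 ik ix xb yi ya.
have gc := ok_cg ok; have F2 := ok_F2 ok.
have ga : g (c i) = i by rewrite gc // ltnW.
have gb : g (c i.+1) = i.+1 by rewrite gc.
have hp : (i.-1).+1 = i by lia.
have ik' : (i.-1 < k)%N by lia.
have gim : g (c i.-1) = i.-1 by rewrite gc //; lia.
have xim : x != c i.-1 by apply: ng'; rewrite gim; lia.
have xa : x != c i by apply: ng'; rewrite ga.
have ilek : (i <= k)%N by lia.
have Fx : 0 < s * O (c i) (c i.+1) x by apply: F2.
have base : 0 < s * O (c i) x (c i.-1).
  by have := F2 i.-1 x ik' xim; rewrite hp orient_cyc; apply.
have Q := left_prop (Q := fun v => 0 < s * O (c i) x v) i0 ilek base
  (step_lemma ik ix xb Fx).
case: (ok_leaf ok y) => [ey|[hl bl]].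
  apply: Q; have : g y != i by apply: contra_neq ya => e; rewrite ey e.
  by move=> h; rewrite ltn_neqAle h yi.
have [gi|gi] : g y = i \/ (g y < i)%N by move: yi; rewrite leq_eqVlt => /orP[/eqP|]; [left|right].
  rewrite gi in bl.
  have Bay : B (c i) y by rewrite (ok_sym ok).
  have h := R_side ok Bay (eq_leq ga) (eq_leq gi) ik ix.
  have Fy : 0 < s * O (c i) (c i.+1) y.
    by apply: F2 => //; apply: ng; rewrite gb gi.
  have e1 : O (c i) y (c i.+1) = - O (c i) (c i.+1) y by rewrite orient_swap.
  have e2 : O (c i) y x = - O (c i) x y by rewrite orient_swap.
  rewrite e1 e2 mulrNN in h.
  rewrite mulrC in Fy.
  by have := trans_pos h Fy; rewrite mulrC.
exact: Q.
Qed.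
End Core2.
Section Core3.
Variables (R : realType) (V : finType) (p : V -> R * R) (B : rel V)
   (k : nat) (c : nat -> V) (g : V -> nat) (s : R).
Hypothesis ok : comb_ok p B k c g s.
Local Notation O a b d := (orient (p a) (p b) (p d)).

Lemma claimB i u v : (0 < i)%N -> (i.+1 < k)%N -> (g u <= i)%N -> u != c i ->
  (i < g v)%N -> v != c i.+1 -> 0 < - s * O (c i.+1) u v.
Proof.
move=> i0 ik gu ua gv vb.
have e1 : (k - (k - i.+1).+1 = i)%N by lia.
have e2 : (k - (k - i.+1) = i.+1)%N by lia.
have := @claimA _ _ _ _ _ _ _ _ (comb_ok_rev ok) (k - i.+1)%N u v ltac:(lia) ltac:(lia)
  ltac:(lia) ltac:(by rewrite /= e1) ltac:(lia) ltac:(by rewrite /= e2).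
by rewrite e2.
Qed.

Lemma switch_cross i u v : (0 < i)%N -> (i.+1 < k)%N -> (i < g v)%N -> v != c i.+1 ->
  (g u <= i)%N -> u != c i ->
  exists z, on_seg z (p (c i)) (p v) /\ on_seg z (p (c i.+1)) (p u).
Proof.
move=> i0 ik gv vb gu ua.
have gc := ok_cg ok; have F2 := ok_F2 ok.
have ga : g (c i) = i by rewrite gc //; lia.
have gb : g (c i.+1) = i.+1 by rewrite gc //; lia.
have hA := claimA ok i0 (ltnW ik) gv vb gu ua.
have hB := claimB i0 ik gu ua gv vb.
have Fv : 0 < s * O (c i) (c i.+1) v.
  apply: F2; [lia | | exact: vb].
  by apply: (gneq (g:=g)); apply/eqP; rewrite ga; lia.
have Fu : 0 < s * O (c i) (c i.+1) u.
  apply: F2; [lia | exact: ua | ].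
  by apply: (gneq (g:=g)); apply/eqP; rewrite gb; lia.
apply: seg_inter.
- rewrite mulrC; apply: (sgn_mul_neg hA).
  by rewrite orient_swap mulrN oppr_lt0.
- rewrite mulrC; apply: (sgn_mul_neg hB).
  by rewrite -orient_cyc mulNr oppr_lt0.
Qed.
End Core3.
Ltac nlia := repeat (match goal with H : ?T |- _ =>
   match type of T with Prop => idtac end;
   match T with
   | is_true (leq _ _) => fail 1
   | @eq nat _ _ => fail 1
   | _ => clear H
   end end); lia.

Section Setup.
Variables (R : realType) (V : finType) (p : V -> R * R) (B : rel V).
Hypothesis gp : general_position p.
Hypothesis Bsym : forall u v, B u v = B v u.
Hypothesis Birr : forall u, ~~ B u u.
Variables (x0 : V) (P : seq V).
Hypothesis sz : (0 < size P)%N.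
Hypothesis uq : uniq P.
Hypothesis hpath : forall i, (i.+1 < size P)%N -> B (nth x0 P i) (nth x0 P i.+1).
Hypothesis eqn : graph_pts p B `&` hull_boundary p = path_pts p x0 P.
Hypothesis hleaf : forall w, w \notin P ->
  exists u, path_interior x0 P u /\ forall x, B w x = (x == u).
Local Notation O a b d := (orient (p a) (p b) (p d)).

Definition kk := (size P).-1.
Definition cc j := nth x0 P j.
Definition par v := odflt v [pick u | B v u].
Definition gg v := if v \in P then index v P else index (par v) P.

Lemma leaf_info v : v \notin P ->
  exists i, [/\ (0 < i)%N, (i < kk)%N, gg v = i & forall x, B v x = (x == cc i)].
Proof.
move=> vP; have [u [[i [[i0 isz] eu]] hB]] := hleaf vP.
exists i; split => //; first by rewrite /kk; nlia.
  rewrite /gg (negbTE vP) /par; case: pickP => [u' hu'|h0] /=.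
    by move: hu'; rewrite hB => /eqP ->; rewrite eu index_uniq //; exact: ltnW.
  by have := h0 u; rewrite hB eqxx.
by rewrite /cc -eu.
Qed.

Lemma cg j : (j <= kk)%N -> gg (cc j) = j.
Proof.
move=> jk; have js : (j < size P)%N by rewrite /kk in jk; nlia.
by rewrite /gg /cc mem_nth // index_uniq.
Qed.

Lemma gk v : (gg v <= kk)%N.
Proof.
case: (boolP (v \in P)) => vP.
  by rewrite /gg vP /kk -ltnS prednK // index_mem.
by have [i [_ ik -> _]] := leaf_info vP; apply: ltnW.
Qed.

Lemma leafP v : v = cc (gg v) \/ ((0 < gg v < kk)%N /\ B v (cc (gg v))).
Proof.
case: (boolP (v \in P)) => vP.
  by left; rewrite /gg vP /cc nth_index.
have [i [i0 ik -> hB]] := leaf_info vP.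
by right; rewrite i0 ik hB eqxx.
Qed.

Lemma pathB j : (j < kk)%N -> B (cc j) (cc j.+1).
Proof. by move=> jk; apply: hpath; rewrite /kk in jk; nlia. Qed.

Lemma cneq i j : (i <= kk)%N -> (j <= kk)%N -> i != j -> cc i != cc j.
Proof.
move=> ik jk ij; apply: contra_neq ij => e.
by rewrite -(cg ik) -(cg jk) e.
Qed.

Lemma edge_nosplit j v1 v2 : (j < kk)%N -> 0 < O (cc j) (cc j.+1) v1 ->
  O (cc j) (cc j.+1) v2 < 0 -> False.
Proof.
move=> jk h1 h2; have hint := mid_interior h1 h2.
have hpp : path_pts p x0 P (midp (p (cc j)) (p (cc j.+1))).
  right; exists j; split; first by rewrite /kk in jk; nlia.
  apply: cmb_on_seg; apply/andP; split; rewrite ?invr_ge0 // invf_le1 //; lra.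
have : (graph_pts p B `&` hull_boundary p) (midp (p (cc j)) (p (cc j.+1))) by rewrite eqn.
by case=> _ [_ hn]; apply: hn.
Qed.

Lemma F2_exists : (1 < kk)%N -> exists s : R,
  forall j v, (j < kk)%N -> v != cc j -> v != cc j.+1 -> 0 < s * O (cc j) (cc j.+1) v.
Proof.
move=> k2.
have Onz : forall a b d, a != b -> b != d -> a != d -> O a b d != 0.
  by move=> a b d h1 h2 h3; apply/eqP; apply: gp.2.
pose s : R := if 0 < O (cc 0) (cc 1) (cc 2) then 1 else -1.
exists s.
have s0 : s != 0 by rewrite /s; case: ifP => _; rewrite ?oppr_eq0 oner_eq0.
have sign_all : forall j, (j < kk)%N -> forall w, w != cc j -> w != cc j.+1 ->
    0 < s * O (cc j) (cc j.+1) w ->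
    forall v, v != cc j -> v != cc j.+1 -> 0 < s * O (cc j) (cc j.+1) v.
  move=> j jk w hw1 hw2 hw v hv1 hv2; apply: contrapT => hn.
  have cj : cc j != cc j.+1 by apply: cneq; nlia.
  have nO : O (cc j) (cc j.+1) v != 0 by apply: Onz; rewrite // eq_sym.
  have neg := neg_prod s0 nO hn.
  have pn := sgn_mul_neg hw neg.
  have [pw|nw] := ltP 0 (O (cc j) (cc j.+1) w).
    by apply: (@edge_nosplit j w v jk pw); rewrite -(pmulr_rlt0 _ pw).
  have nw' : O (cc j) (cc j.+1) w < 0.
    rewrite lt_neqAle nw andbT; apply/eqP => e; move: pn; rewrite e mul0r ltxx.
    by [].
  by apply: (@edge_nosplit j v w jk _ nw'); rewrite -(nmulr_rlt0 _ nw').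
elim => [|j IH] v jk h1 h2.
  apply: (sign_all 0 jk (cc 2)) => //.
  - by apply: cneq; nlia.
  - by apply: cneq; nlia.
  - have n3 : O (cc 0) (cc 1) (cc 2) != 0.
      by apply: Onz; apply: cneq; nlia.
    rewrite /s; case: ifP => [hp|hn]; first by rewrite mul1r.
    rewrite mulN1r oppr_gt0 lt_neqAle n3 /= leNgt hn //.
apply: (sign_all j.+1 jk (cc j)) => //.
- by apply: cneq; nlia.
- by apply: cneq; nlia.
- have := IH (cc j.+2) ltac:(nlia) ltac:(apply: cneq; nlia) ltac:(apply: cneq; nlia).
  by rewrite orient_cyc.
Qed.

Lemma ok_exists (hc3 : forall u v x y, B u v -> B x y ->
      ~ line_crosses_seg (p u) (p v) (p x) (p y)) :
  (1 < kk)%N -> exists s : R, comb_ok p B kk cc gg s.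
Proof.
move=> k2; have [s F2] := F2_exists k2; exists s.
split => //; [exact: cg | exact: gk | exact: leafP | exact: pathB].
Qed.
End Setup.
Lemma nat_switch (f : nat -> bool) n : (1 <= n)%N -> f 1 -> ~~ f n ->
  exists i, [/\ (0 < i)%N, (i < n)%N, f i & ~~ f i.+1].
Proof.
elim: n => [|n IH] // n1 f1 fn.
have n0 : (0 < n)%N by case: n IH n1 fn => // _ _; rewrite f1.
case: (boolP (f n)) => hn; first by exists n.
by have [i [i0 iN fi fi1]] := IH n0 f1 hn; exists i; split => //; apply: ltnW.
Qed.

Theorem theorem4 (R : realType) (V : finType) (p : V -> R * R) (B : rel V) :
  general_position p ->
  is_graph B ->
  ((exists v : V, forall a b, B a b = star v a b) \/ is_comb p B) ->
  forall H : rel V, simple_spanning p H -> exists u v : V, B u v && H u v.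
Proof.
move=> gp [Bsym Birr] hBc H [[Hsym Hirr] Hsimp Hnoiso].
case: hBc => [[v0 hstar]|[ssB [x0 [P [[sz uq] hpath eqn hleaf hc3]]]]].
  have [u hu] := Hnoiso v0; exists v0, u.
  have vu : v0 != u by apply/eqP => e; move: hu; rewrite -e (negbTE (Hirr v0)).
  by rewrite hstar /star vu eqxx hu.
apply: contrapT => hno.
have HB : forall u v, H u v -> ~~ B u v.
  by move=> u v huv; apply/negP => buv; apply: hno; exists u, v; rewrite buv huv.
have leaf := leafP sz uq hleaf.
have gk' := gk sz uq hleaf.
have path := pathB sz hpath.
have cg' := cg B x0 sz uq.
have [k1|k2] := leqP (kk P) 1.
  have [w hw] := Hnoiso (cc x0 P 0).
  have wne : w != cc x0 P 0 by apply/eqP => e; move: hw; rewrite e (negbTE (Hirr _)).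
  case: (leaf w) => [ew|[hl _]]; last by move: hl k1; nlia.
  have gw0 : gg B P w != 0%N by apply: contra_neq wne => e; rewrite ew e.
  have gwk := gk' w.
  have e1 : gg B P w = 1%N by move: gw0 gwk k1; nlia.
  have e2 : kk P = 1%N by move: gw0 gwk k1; nlia.
  have := HB _ _ hw; rewrite ew e1.
  by rewrite path // e2.
have [s ok] := ok_exists gp Bsym Birr sz uq hpath eqn hleaf hc3 k2.
move: k2 ok; generalize (kk P) (cc x0 P) (gg B P) => k c g k2 ok.
pose nb i := odflt (c i) [pick v | H (c i) v].
have Hnb : forall i, H (c i) (nb i).
  move=> i; rewrite /nb; case: pickP => [v hv|h0] //=.
  by have [w hw] := Hnoiso (c i); rewrite h0 in hw.
have f0 : forall i, nb i != c i.
  by move=> i; apply/eqP => e; move: (Hnb i); rewrite e (negbTE (Hirr _)).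
have f1 : forall i, (i < k)%N -> nb i != c i.+1.
  move=> i ik; apply/eqP => e; have := HB _ _ (Hnb i).
  by rewrite e (ok_path ok).
have f2 : forall i, (0 < i <= k)%N -> nb i != c i.-1.
  move=> i /andP[i0 ik]; apply/eqP => e; have := HB _ _ (Hnb i).
  rewrite e (ok_sym ok).
  have ik' : (i.-1 < k)%N by move: i0 ik; nlia.
  have hp := ok_path ok ik'; rewrite prednK // in hp.
  by rewrite hp.
have f3 : forall i, (i <= k)%N -> g (nb i) != i.
  move=> i ik; apply/eqP => e.
  case: (ok_leaf ok (nb i)) => [ev|[_ bl]].
    by move: (f0 i); rewrite {1}ev e eqxx.
  rewrite e (ok_sym ok) in bl.
  by have := HB _ _ (Hnb i); rewrite bl.
have r1 : (1 < g (nb 1))%N.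
  have := f3 1%N ltac:(by apply: ltnW).
  case: (ok_leaf ok (nb 1)) => [ev|[hl _]].
    2: by move: hl => /andP[h0 _] hne; rewrite ltn_neqAle eq_sym hne.
  have := f2 1%N ltac:(by rewrite /= ltnW).
  rewrite {1}ev /=; case: (g (nb 1)) => [|[|n]] //; by rewrite eqxx.
have rk : ~~ (k.-1 < g (nb k.-1))%N.
  have gk2 := ok_gk ok (nb k.-1).
  rewrite -leqNgt; case: (ok_leaf ok (nb k.-1)) => [ev|[hl _]]; last by move: hl; nlia.
  have := f1 k.-1 ltac:(by rewrite prednK //; apply: ltnW).
  rewrite {1}ev prednK; last by apply: ltnW.
  case: (ltngtP (g (nb k.-1)) k) => [h|h|->]; first by move: h; nlia.
    by move: h gk2; nlia.
  by rewrite eqxx.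
have [i [i0 ik ri ri1]] := nat_switch (f := fun i => (i < g (nb i))%N) (n := k.-1)
  ltac:(move: k2; nlia) r1 rk.
have ik' : (i.+1 < k)%N by move: ik k2; nlia.
set v := nb i; set u := nb i.+1.
have gu : (g u <= i)%N.
  have := f3 i.+1 ltac:(by apply: ltnW).
  by move: ri1; rewrite /u -leqNgt leq_eqVlt ltnS => /orP[->|].
have ua : u != c i by have := f2 i.+1 ltac:(by rewrite /= ltnW).
have vb : v != c i.+1 by apply: f1; apply: ltn_trans ik'.
have [z [hz1 hz2]] := switch_cross ok i0 ik' ri vb gu ua.
apply: (Hsimp (c i) v (c i.+1) u (Hnb i) (Hnb i.+1)).
split; last by exists z.
have ng : forall a b, (g a < g b)%N -> a != b.
  by move=> a b h; apply/eqP => e; move: h; rewrite e ltnn.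
have gci : g (c i) = i by rewrite (ok_cg ok) //; apply: ltnW; apply: ltn_trans ik'.
have gci1 : g (c i.+1) = i.+1 by rewrite (ok_cg ok) //; apply: ltnW.
split; first by rewrite eq_sym; apply: f0.
split; first by rewrite eq_sym; apply: f0.
split; first by apply: ng; rewrite gci gci1.
split; first by rewrite eq_sym.
split; first exact: vb.
by rewrite eq_sym; apply: ng; apply: leq_ltn_trans gu ri.
Qed.
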